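(* Let $(G,\cdot,\odot,H,\circ,\boxdot,N,\star)$ be a two-sided bracoid (so $(N,\star)$ is abelian). Then for all $g\in G$, $h\in H$ and $\eta\in N$: (1) $\alpha(g)$ is an endomorphism of $(N,\star)$; (2) $\beta(h)$ is an endomorphism of $(N,\star)$; (3) $({}^{\gamma(g)}\eta)^{\delta(h)}={}^{\gamma(g)}(\eta^{\delta(h)})$; (4) $({}^{\alpha(g)}\eta)^{\beta(h)}={}^{\alpha(g)}(\eta^{\beta(h)})$.
   Context: For a group $(N,\star)$, $e_N$ denotes its identity and $\overline{\eta}$ the inverse of $\eta$. A left skew bracoid is $(G,\cdot,N,\star,\odot)$ with $(G,\cdot),(N,\star)$ groups and $\odot$ a transitive left action of $G$ on $N$ with $g\odot(\mu\star\eta)=(g\odot\mu)\star\overline{(g\odot e_N)}\star(g\odot\eta)$ for all $g\in G$, $\mu,\eta\in N$. A right skew bracoid is $(H,\circ,N,\star,\boxdot)$ with $(H,\circ),(N,\star)$ groups and $\boxdot$ a transitive right action of $H$ on $N$ with $(\eta\star\mu)\boxdot h=(\eta\boxdot h)\star\overline{(e_N\boxdot h)}\star(\mu\boxdot h)$ for all $h\in H$, $\eta,\mu\in N$. A two-sided skew bracoid $(G,\cdot,\odot,H,\circ,\boxdot,N,\star)$ consists of a left skew bracoid $(G,\cdot,N,\star,\odot)$ and a right skew bracoid $(H,\circ,N,\star,\boxdot)$ on the same group $(N,\star)$ such that $g\odot(\eta\boxdot h)=(g\odot\eta)\boxdot h$ for all $g\in G,h\in H,\eta\in N$; it is a two-sided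 bracoid if $(N,\star)$ is abelian. Define, for $g\in G$, $h\in H$, $\eta\in N$: ${}^{\gamma(g)}\eta=\overline{(g\odot e_N)}\star(g\odot\eta)$; ${}^{\alpha(g)}\eta=\overline{(g\odot e_N)}\star(g\odot\eta)\star\overline{\eta}$; $\eta^{\delta(h)}=(\eta\boxdot h)\star\overline{(e_N\boxdot h)}$; $\eta^{\beta(h)}=\overline{\eta}\star(\eta\boxdot h)\star\overline{(e_N\boxdot h)}$. *)

(* Defs.v *)
Set Implicit Arguments.

Record Group := {
  carrier :> Type;
  op : carrier -> carrier -> carrier;
  e : carrier;
  inv : carrier -> carrier;
  op_assoc : forall x y z, op x (op y z) = op (op x y) z;
  op_e_l : forall x, op e x = x;
  op_e_r : forall x, op x e = x;
  op_inv_l : forall x, op (inv x) x = e;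
  op_inv_r : forall x, op x (inv x) = e
}.

Definition abelian (N : Group) : Prop := forall x y : N, op N x y = op N y x.

Definition is_transitive_left_action (G N : Group) (act : G -> N -> N) : Prop :=
  (forall x : N, act (e G) x = x) /\
  (forall (g1 g2 : G) (x : N), act (op G g1 g2) x = act g1 (act g2 x)) /\
  (forall x y : N, exists g : G, act g x = y).

Definition is_transitive_right_action (H N : Group) (act : N -> H -> N) : Prop :=
  (forall x : N, act x (e H) = x) /\
  (forall (h1 h2 : H) (x : N), act x (op H h1 h2) = act (act x h1) h2) /\
  (forall x y : N, exists h : H, act x h = y).

Definition left_skew_bracoid (G N : Group) (odot : G -> N -> N) : Prop :=
  is_transitive_left_action G N odot /\
  forall (g : G) (mu eta : N),
    odot g (op N mu eta) =
      op N (op N (odot g mu) (inv N (odot g (e N)))) (odot g eta).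

Definition right_skew_bracoid (H N : Group) (boxdot : N -> H -> N) : Prop :=
  is_transitive_right_action H N boxdot /\
  forall (h : H) (eta mu : N),
    boxdot (op N eta mu) h =
      op N (op N (boxdot eta h) (inv N (boxdot (e N) h))) (boxdot mu h).

Definition two_sided_skew_bracoid (G H N : Group)
  (odot : G -> N -> N) (boxdot : N -> H -> N) : Prop :=
  left_skew_bracoid G N odot /\ right_skew_bracoid H N boxdot /\
  forall (g : G) (h : H) (eta : N), odot g (boxdot eta h) = boxdot (odot g eta) h.

Definition two_sided_bracoid (G H N : Group)
  (odot : G -> N -> N) (boxdot : N -> H -> N) : Prop :=
  two_sided_skew_bracoid G H N odot boxdot /\ abelian N.

Definition gammaM (G N : Group) (odot : G -> N -> N) (g : G) (eta : N) : N :=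
  op N (inv N (odot g (e N))) (odot g eta).
Definition alphaM (G N : Group) (odot : G -> N -> N) (g : G) (eta : N) : N :=
  op N (op N (inv N (odot g (e N))) (odot g eta)) (inv N eta).
Definition deltaM (H N : Group) (boxdot : N -> H -> N) (h : H) (eta : N) : N :=
  op N (boxdot eta h) (inv N (boxdot (e N) h)).
Definition betaM (H N : Group) (boxdot : N -> H -> N) (h : H) (eta : N) : N :=
  op N (op N (inv N eta) (boxdot eta h)) (inv N (boxdot (e N) h)).

Definition is_endomorphism (N : Group) (f : N -> N) : Prop :=
  forall x y : N, f (op N x y) = op N (f x) (f y).

(* Main.v *)
Require Import Defs.
From Stdlib Require Import List Bool Arith.
Import ListNotations.

Section Abel.
Variable N : Group.
Hypothesis Hab : abelian N.

Inductive ex := At (n:nat) | Mu (a b:ex) | Iv (a:ex) | Un.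

Fixpoint ev (env : list (carrier N)) (t : ex) : carrier N :=
  match t with
  | At n => nth n env (e N)
  | Mu a b => op N (ev env a) (ev env b)
  | Iv a => inv N (ev env a)
  | Un => e N
  end.

Definition lit (env : list (carrier N)) (x : nat * bool) : carrier N :=
  if snd x then inv N (nth (fst x) env (e N)) else nth (fst x) env (e N).

Fixpoint evl env (l : list (nat*bool)) : carrier N :=
  match l with [] => e N | x :: r => op N (lit env x) (evl env r) end.

Definition flip (x : nat*bool) := (fst x, negb (snd x)).

Fixpoint flat (t : ex) : list (nat*bool) :=
  match t with
  | At n => [(n,false)]
  | Mu a b => flat a ++ flat b
  | Iv a => map flip (flat a)
  | Un => []
  end.

Lemma inv_unique : forall x y : carrier N, op N x y = e N -> x = inv N y.
Proof.
  intros x y H. rewrite <- (op_e_r N x). rewrite <- (op_inv_r N y).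
  rewrite op_assoc, H, op_e_l. reflexivity.
Qed.

Lemma inv_inv : forall x : carrier N, inv N (inv N x) = x.
Proof. intros x. symmetry. apply inv_unique. apply op_inv_r. Qed.

Lemma inv_op : forall x y : carrier N, inv N (op N x y) = op N (inv N x) (inv N y).
Proof.
  intros x y. symmetry. apply inv_unique.
  rewrite (Hab (inv N x) (inv N y)).
  rewrite <- op_assoc, (op_assoc N (inv N x) x y), op_inv_l, op_e_l, op_inv_l. reflexivity.
Qed.

Lemma inv_e : inv N (e N) = e N.
Proof. symmetry. apply inv_unique. apply op_e_l. Qed.

Lemma evl_app : forall env l1 l2, evl env (l1 ++ l2) = op N (evl env l1) (evl env l2).
Proof.
  intros env l1 l2. induction l1; simpl. rewrite op_e_l; auto.
  rewrite IHl1, op_assoc. auto.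
Qed.

Lemma lit_flip : forall env x, lit env (flip x) = inv N (lit env x).
Proof. intros env [n b]; unfold lit, flip; destruct b; simpl; auto. rewrite inv_inv; auto. Qed.

Lemma evl_flip : forall env l, evl env (map flip l) = inv N (evl env l).
Proof.
  intros env l; induction l; simpl. rewrite inv_e; auto.
  rewrite IHl, lit_flip, inv_op. auto.
Qed.

Lemma ev_flat : forall env t, ev env t = evl env (flat t).
Proof.
  intros env t; induction t; simpl.
  - unfold lit; simpl. rewrite op_e_r; auto.
  - rewrite evl_app, IHt1, IHt2; auto.
  - rewrite evl_flip, IHt; auto.
  - auto.
Qed.

Definition eqx (x y : nat*bool) : bool := Nat.eqb (fst x) (fst y) && Bool.eqb (snd x) (snd y).

Fixpoint rm (x : nat*bool) (l : list (nat*bool)) : option (list (nat*bool)) :=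
  match l with
  | [] => None
  | y :: r => if eqx x y then Some r else
      match rm x r with Some r' => Some (y :: r') | None => None end
  end.

Lemma rm_ok : forall env x l l', rm x l = Some l' -> evl env l = op N (lit env x) (evl env l').
Proof.
  intros env x l; induction l as [|y r IH]; intros l' H; simpl in H. discriminate.
  destruct (eqx x y) eqn:E.
  - inversion H; subst. unfold eqx in E. apply andb_prop in E. destruct E as [E1 E2].
    apply Nat.eqb_eq in E1. apply Bool.eqb_prop in E2. destruct x, y; simpl in *; subst. reflexivity.
  - destruct (rm x r) eqn:E2; try discriminate. inversion H; subst.
    simpl. rewrite (IH l eq_refl). rewrite !op_assoc. rewrite (Hab (lit env y)). reflexivity.
Qed.

Fixpoint chk (k : nat) (l : list (nat*bool)) : bool :=
  match l with
  | [] => true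
  | x :: r => match k with 0 => false | S k =>
      match rm (flip x) r with Some r' => chk k r' | None => false end end
  end.

Lemma chk_ok : forall env k l, chk k l = true -> evl env l = e N.
Proof.
  intros env k; induction k; intros l H; destruct l as [|x r]; simpl in *; auto; try discriminate.
  destruct (rm (flip x) r) eqn:E; try discriminate.
  rewrite (rm_ok env _ _ _ E), lit_flip, op_assoc, op_inv_r, op_e_l. apply IHk; auto.
Qed.

Lemma abel_sound : forall env t1 t2,
  chk 1000 (flat t1 ++ map flip (flat t2)) = true -> ev env t1 = ev env t2.
Proof.
  intros env t1 t2 H. apply (chk_ok env) in H.
  rewrite evl_app, evl_flip, <- !ev_flat in H.
  rewrite <- (inv_inv (ev env t2)). apply inv_unique. auto.
Qed.

End Abel.

Ltac collect t env :=
  lazymatch t with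
  | op _ ?a ?b => let env1 := collect a env in collect b env1
  | inv _ ?a => collect a env
  | e _ => env
  | _ => lazymatch env with
         | context [cons t _] => env
         | _ => constr:(cons t env)
         end
  end.

Ltac idx x env :=
  lazymatch env with
  | cons x _ => constr:(O)
  | cons _ ?r => let n := idx x r in constr:(S n)
  end.

Ltac reif t env :=
  lazymatch t with
  | op _ ?a ?b => let ra := reif a env in let rb := reif b env in constr:(Mu ra rb)
  | inv _ ?a => let ra := reif a env in constr:(Iv ra)
  | e _ => constr:(Un)
  | _ => let n := idx t env in constr:(At n)
  end.

Ltac abel Hab :=
  lazymatch goal with
  | |- @eq (carrier ?N) ?l ?r =>
    let env0 := collect l (@nil (carrier N)) in
    let env := collect r env0 in
    let rl := reif l env in
    let rr := reif r env in
    change (ev N env rl = ev N env rr);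
    apply (abel_sound N Hab env rl rr); vm_compute; reflexivity
  end.

Theorem theorem3p3 (G H N : Group) (odot : G -> N -> N) (boxdot : N -> H -> N) :
  two_sided_bracoid G H N odot boxdot ->
  forall (g : G) (h : H) (eta : N),
    is_endomorphism N (alphaM G N odot g) /\
    is_endomorphism N (betaM H N boxdot h) /\
    deltaM H N boxdot h (gammaM G N odot g eta) = gammaM G N odot g (deltaM H N boxdot h eta) /\
    betaM H N boxdot h (alphaM G N odot g eta) = alphaM G N odot g (betaM H N boxdot h eta).
Proof.
  intros [[[_ Hl] [[_ Hr] Hc]] Hab] g h eta.
  assert (Linvl : forall x, odot g (inv N x) =
            op N (op N (odot g (e N)) (odot g (e N))) (inv N (odot g x))).
  { intros x. pose proof (Hl g (inv N x) x) as E. rewrite op_inv_l in E.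
    transitivity (op N (op N (op N (odot g (inv N x)) (inv N (odot g (e N)))) (odot g x))
                   (op N (op N (odot g (e N)) (odot g (e N))) (op N (inv N (odot g x)) (inv N (odot g (e N)))))).
    abel Hab. rewrite <- E. abel Hab. }
  assert (Linvr : forall x, boxdot (inv N x) h =
            op N (op N (boxdot (e N) h) (boxdot (e N) h)) (inv N (boxdot x h))).
  { intros x. pose proof (Hr h (inv N x) x) as E. rewrite op_inv_l in E.
    transitivity (op N (op N (op N (boxdot (inv N x) h) (inv N (boxdot (e N) h))) (boxdot x h))
                   (op N (op N (boxdot (e N) h) (boxdot (e N) h)) (op N (inv N (boxdot x h)) (inv N (boxdot (e N) h))))).
    abel Hab. rewrite <- E. abel Hab. }
  split; [|split; [|split]].
  - intros x y. unfold alphaM. rewrite Hl. abel Hab.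
  - intros x y. unfold betaM. rewrite Hr. abel Hab.
  - unfold deltaM, gammaM.
    rewrite ?Hr, ?Linvr, ?Hl, ?Linvl, <- ?Hc, ?Hl, ?Linvl. abel Hab.
  - unfold betaM, alphaM.
    rewrite ?Hr, ?Linvr, ?Hl, ?Linvl, <- ?Hc, ?Hl, ?Linvl. abel Hab.
Qed.
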